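(* For every constant $d>1$, every (deterministic) $d$-approximation algorithm for the sum of a sorted list of nonnegative numbers must, in the worst case, make $\Omega\!\left(\min\!\left(\log n,\ \log\frac{x_{max}}{x_{min}}\right)\right)$ (adaptive) queries to the input list, where $n$ is the length of the list and $x_{max}$ and $x_{min}$ are the largest and the least positive elements of the input list, respectively.
   Context: The input is a list $a_1\le a_2\le\cdots\le a_n$ of nonnegative reals sorted in nondecreasing order; the algorithm accesses it only by adaptive queries, each revealing one entry $a_i$. A real number $s$ is a $d$-approximation for the sum if $\frac{1}{d}\sum_{i=1}^n a_i\le s\le d\sum_{i=1}^n a_i$. *)

(* Defs.v *)
From Stdlib Require Import Reals Lra List Sorted.
Import ListNotations.
Open Scope R_scope.

(* A deterministic adaptive query algorithm, as a decision tree: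
   either output an estimate, or query index i (0-based) and continue
   depending on the revealed value. *)
Inductive qalg : Type :=
| Output : R -> qalg
| Query : nat -> (R -> qalg) -> qalg.

Fixpoint run (t : qalg) (a : list R) : R * nat :=
  match t with
  | Output s => (s, 0%nat)
  | Query i k => let r := run (k (nth i a 0)) a in (fst r, S (snd r))
  end.

Definition lsum (a : list R) : R := fold_right Rplus 0 a.

Definition valid_input (a : list R) : Prop :=
  Forall (fun x => 0 <= x) a /\ Sorted Rle a.

Definition d_approx (d s S : R) : Prop := S / d <= s /\ s <= d * S.

(* The list has a positive element, so x_min (least positive element) exists. *)
Definition has_pos (a : list R) : Prop := exists x, In x a /\ 0 < x.

(* x_max / x_min <= r : every element is at most r times every positive element. *)
Definition ratio_le (a : list R) (r : R) : Prop :=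
  forall x y, In x a -> In y a -> 0 < x -> y <= r * x.

(* Main.v *)
Require Import Defs.
From Stdlib Require Import Reals List Lra Lia Sorted Arith.
Import ListNotations.
Open Scope R_scope.

Lemma lnle : forall x y, 0 < x -> x <= y -> ln x <= ln y.
Proof.
  intros x y Hx Hxy. destruct (Rle_lt_or_eq_dec _ _ Hxy) as [H|H].
  - left; apply ln_increasing; auto.
  - subst; lra.
Qed.

Lemma ln_nonpos_case : forall r, ~ 0 < r -> ln r = 0.
Proof. intros r H. unfold ln. destruct (Rlt_dec 0 r); [contradiction|reflexivity]. Qed.

Lemma ln_step : forall n : nat, ln (INR n + 2) <= ln (INR n + 1) + / (INR n + 1).
Proof.
  intro n. assert (H0 : 0 <= INR n) by apply pos_INR.
  replace (INR n + 2) with ((INR n + 1) * (1 + / (INR n + 1))) by (field; lra).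
  rewrite ln_mult; try lra.
  - apply Rplus_le_compat_l. rewrite <- (ln_exp (/ (INR n + 1))) at 2.
    apply lnle. assert (0 < / (INR n + 1)) by (apply Rinv_0_lt_compat; lra). lra.
    apply exp_ineq1_le.
  - assert (0 < / (INR n + 1)) by (apply Rinv_0_lt_compat; lra). lra.
Qed.

Fixpoint qs (t : qalg) (a : list R) : list nat :=
  match t with
  | Output _ => []
  | Query i k => i :: qs (k (nth i a 0)) a
  end.

Lemma qs_len : forall t a, snd (run t a) = length (qs t a).
Proof. induction t; intros a; simpl; auto. Qed.

Lemma run_agree : forall t a b,
  (forall i, In i (qs t a) -> nth i b 0 = nth i a 0) -> run t b = run t a.
Proof.
  induction t as [s|i k IH]; intros a b H; simpl; auto.
  simpl in H. rewrite (H i (or_introl eq_refl)).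
  rewrite (IH (nth i a 0) a b); auto.
Qed.

Lemma nth_map_seq : forall (g : nat -> R) n i,
  nth i (map g (seq 0 n)) 0 = if (i <? n)%nat then g i else 0.
Proof.
  intros g n i. destruct (Nat.ltb_spec i n).
  - rewrite (nth_indep (map g (seq 0 n)) 0 (g 0%nat)) by (rewrite length_map, length_seq; auto).
    rewrite map_nth, seq_nth; auto.
  - apply nth_overflow. rewrite length_map, length_seq; auto.
Qed.

Lemma sorted_map_seq : forall (g : nat -> R) len s,
  (forall i, (s <= i)%nat -> (S i < s + len)%nat -> g i <= g (S i)) ->
  Sorted Rle (map g (seq s len)).
Proof.
  intros g len. induction len as [|len IH]; intros s H; simpl.
  - constructor.
  - constructor.
    + apply IH. intros i Hi Hl. apply H; lia.
    + destruct len; simpl; constructor. apply H; lia.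
Qed.

Lemma lsum_app : forall l1 l2, lsum (l1 ++ l2) = lsum l1 + lsum l2.
Proof. induction l1; intros; simpl; try lra. unfold lsum in *; simpl. rewrite IHl1. lra. Qed.

Lemma lsum_le : forall (A : Type) (g h : A -> R) l,
  (forall x, In x l -> g x <= h x) -> lsum (map g l) <= lsum (map h l).
Proof.
  induction l; intros H; simpl; unfold lsum; simpl; try lra.
  apply Rplus_le_compat. apply H; simpl; auto.
  apply IHl. intros; apply H; simpl; auto.
Qed.

Lemma lsum_plus : forall (A : Type) (g h : A -> R) l,
  lsum (map (fun x => g x + h x) l) = lsum (map g l) + lsum (map h l).
Proof. induction l; unfold lsum in *; simpl; try lra. Qed.

Lemma lsum_swap : forall (T : nat -> nat -> R) (Q l : list nat),
  lsum (map (fun i => lsum (map (fun q => T q i) Q)) l)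
  = lsum (map (fun q => lsum (map (fun i => T q i) l)) Q).
Proof.
  intros T Q l. induction l as [|i l IH].
  - simpl. induction Q; unfold lsum in *; simpl; lra.
  - change (lsum (map (fun q => T q i) Q) + lsum (map (fun i => lsum (map (fun q => T q i) Q)) l)
      = lsum (map (fun q => T q i + lsum (map (fun i0 => T q i0) l)) Q)).
    rewrite lsum_plus, IH. reflexivity.
Qed.

Lemma lsum_const_part : forall (q n : nat) (v : R),
  lsum (map (fun i => if (q <=? i)%nat then v else 0) (seq 0 n)) = INR (n - q) * v.
Proof.
  intros q n v. induction n as [|n IH].
  - simpl. unfold lsum; simpl. lra.
  - rewrite seq_S, map_app, lsum_app, IH. cbn [map]. unfold lsum. cbn [fold_right]. replace (0+n)%nat with n by lia.
    destruct (Nat.leb_spec q n).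
    + replace (S n - q)%nat with (S (n - q)) by lia. rewrite S_INR. lra.
    + replace (S n - q)%nat with (n - q)%nat by lia. lra.
Qed.

Lemma fold_max_le : forall l x, 0 <= x -> (forall y, In y l -> y <= x) ->
  fold_right Rmax 0 l <= x.
Proof.
  induction l; intros x Hx H; simpl; auto.
  apply Rmax_lub. apply H; simpl; auto. apply IHl; auto. intros; apply H; simpl; auto.
Qed.

Lemma fold_max_ge : forall l x, In x l -> x <= fold_right Rmax 0 l.
Proof.
  induction l; intros x H; simpl in *. contradiction.
  destruct H. subst; apply Rmax_l. eapply Rle_trans; [apply IHl; auto| apply Rmax_r].
Qed.

Lemma fold_max_sum : forall l, (forall y, In y l -> 0 <= y) -> fold_right Rmax 0 l <= lsum l.
Proof.
  induction l; intros H; simpl; unfold lsum; simpl; try lra.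
  assert (0 <= a) by (apply H; simpl; auto).
  assert (fold_right Rmax 0 l <= lsum l) by (apply IHl; intros; apply H; simpl; auto).
  assert (0 <= fold_right Rmax 0 l) by (destruct l; simpl; [lra| eapply Rle_trans; [apply H; simpl; auto|apply Rmax_l]]).
  unfold lsum in H1. apply Rmax_lub; lra.
Qed.

Lemma fold_max_mono : forall (g h : nat -> R) l, (forall q, g q <= h q) ->
  fold_right Rmax 0 (map g l) <= fold_right Rmax 0 (map h l).
Proof.
  induction l; intros H; simpl; try lra.
  apply Rmax_lub. eapply Rle_trans; [apply H|apply Rmax_l].
  eapply Rle_trans; [apply IHl; auto|apply Rmax_r].
Qed.

Lemma fold_max_nonneg : forall l, 0 <= fold_right Rmax 0 l.
Proof. induction l; simpl; try lra. eapply Rle_trans; [apply IHl|apply Rmax_r]. Qed.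

Definition f (r : R) (m : nat) : R := if Rle_dec (INR m) r then / INR m else 0.

Lemma f_nonneg : forall r m, 0 <= f r m.
Proof.
  intros r m. unfold f. destruct (Rle_dec (INR m) r); try lra.
  destruct m. simpl. rewrite Rinv_0. lra.
  left. apply Rinv_0_lt_compat. apply lt_0_INR. lia.
Qed.

Lemma f_mono : forall r m1 m2, (1 <= m1)%nat -> (m1 <= m2)%nat -> f r m2 <= f r m1.
Proof.
  intros r m1 m2 H1 H2. unfold f.
  assert (1 <= INR m1) by (apply (le_INR 1); auto).
  assert (INR m1 <= INR m2) by (apply le_INR; auto).
  destruct (Rle_dec (INR m2) r); destruct (Rle_dec (INR m1) r); try lra.
  apply Rinv_le_contravar; lra.
  left; apply Rinv_0_lt_compat; lra.
Qed.

Lemma f_le1 : forall r m, (1 <= m)%nat -> f r m <= 1.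
Proof.
  intros r m H. unfold f. assert (1 <= INR m) by (apply (le_INR 1); auto).
  destruct (Rle_dec (INR m) r); try lra.
  rewrite <- Rinv_1. apply Rinv_le_contravar; lra.
Qed.

Lemma f_pos : forall r m, 0 < f r m -> 1 <= r * f r m.
Proof.
  intros r m H. unfold f in *. destruct (Rle_dec (INR m) r); try lra.
  destruct m. simpl in H. rewrite Rinv_0 in H. lra.
  assert (0 < INR (S m)) by (apply lt_0_INR; lia).
  assert (INR (S m) * / INR (S m) = 1) by (field; lra).
  assert (0 < / INR (S m)) by (apply Rinv_0_lt_compat; lra). nra.
Qed.

Lemma f_mul : forall r m, INR m * f r m <= 1.
Proof.
  intros r m. unfold f. destruct (Rle_dec (INR m) r); try lra.
  destruct m. simpl. lra.
  assert (0 < INR (S m)) by (apply lt_0_INR; lia).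
  replace (INR (S m) * / INR (S m)) with 1 by (field; lra). lra.
Qed.

Definition aL (n : nat) (r : R) : list R := map (fun i => f r (n - i)) (seq 0 n).

Lemma aL_S : forall n r, lsum (aL (S n) r) = f r (S n) + lsum (aL n r).
Proof.
  intros n r. unfold aL. cbn [seq map]. replace (S n - 0)%nat with (S n) by lia.
  rewrite <- seq_shift, map_map. unfold lsum; cbn [fold_right]. reflexivity.
Qed.

Lemma harmonic : forall r n, 1 <= r -> ln (Rmin (INR n + 1) r) <= lsum (aL n r).
Proof.
  intros r n Hr. induction n as [|n IH].
  - simpl. unfold aL; simpl. unfold lsum; simpl. rewrite Rmin_left by lra.
    replace (0+1) with 1 by lra. rewrite ln_1; lra.
  - rewrite aL_S. rewrite S_INR. assert (H0 : 0 <= INR n) by apply pos_INR.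
    unfold f at 1. rewrite S_INR. destruct (Rle_dec (INR n + 1) r).
    + rewrite Rmin_left in IH by lra.
      eapply Rle_trans. apply lnle. apply Rmin_glb_lt; lra. apply Rmin_l.
      replace (INR n + 1 + 1) with (INR n + 2) by lra.
      pose proof (ln_step n). lra.
    + rewrite Rmin_right by lra. rewrite Rmin_right in IH by lra. lra.
Qed.

Definition term (a : list R) (q i : nat) : R := if (q <=? i)%nat then nth q a 0 else 0.
Definition bval (a : list R) (Q : list nat) (i : nat) : R :=
  fold_right Rmax 0 (map (fun q => term a q i) Q).

Lemma lsum_ones : forall (Q : list nat), lsum (map (fun _ => 1) Q) = INR (length Q).
Proof.
  induction Q; unfold lsum in *; simpl; try lra. rewrite IHQ. destruct (length Q); simpl; lra.
Qed.

Lemma Rmin_ge : forall x y z, z <= Rmin x y -> z <= x /\ z <= y.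
Proof. intros. split; eapply Rle_trans; eauto; [apply Rmin_l|apply Rmin_r]. Qed.

Lemma ln_ge1 : forall x, 1 <= ln x -> 1 < x.
Proof.
  intros x H. destruct (Rlt_dec 0 x).
  - destruct (Rle_dec x 1); try lra. pose proof (lnle x 1 r r0). rewrite ln_1 in H0. lra.
  - rewrite ln_nonpos_case in H; auto. lra.
Qed.

Theorem theorem2 :
  forall d : R, 1 < d ->
  exists c M : R, 0 < c /\
    forall (n : nat) (r : R) (A : qalg),
      (forall a : list R, length a = n -> valid_input a ->
         d_approx d (fst (run A a)) (lsum a)) ->
      M <= Rmin (ln (INR n)) (ln r) ->
      exists a : list R,
        length a = n /\ valid_input a /\ has_pos a /\ ratio_le a r /\
        c * Rmin (ln (INR n)) (ln r) <= INR (snd (run A a)).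
Proof.
  intros d Hd. exists (/ (d * d)), 1. split.
  { apply Rinv_0_lt_compat. nra. }
  intros n r A HA HM.
  destruct (Rmin_ge _ _ _ HM) as [Hn Hr].
  apply ln_ge1 in Hn. apply ln_ge1 in Hr.
  assert (Hn1 : (1 <= n)%nat). { destruct n. simpl in Hn. lra. lia. }
  set (a := aL n r).
  assert (Hnth : forall i, nth i a 0 = if (i <? n)%nat then f r (n - i) else 0).
  { intro i. unfold a, aL. rewrite nth_map_seq. reflexivity. }
  assert (Hlen : length a = n). { unfold a, aL. rewrite length_map, length_seq; auto. }
  assert (Hanonneg : forall i, 0 <= nth i a 0).
  { intro i. rewrite Hnth. destruct (i <? n)%nat; [apply f_nonneg|lra]. }
  assert (Hamono : forall q i, (q <= i)%nat -> (i < n)%nat -> nth q a 0 <= nth i a 0).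
  { intros q i H1 H2. rewrite !Hnth.
    destruct (Nat.ltb_spec q n); destruct (Nat.ltb_spec i n); try lia.
    apply f_mono; lia. }
  assert (Hva : valid_input a).
  { split.
    - apply Forall_forall. intros x Hx. unfold a, aL in Hx. apply in_map_iff in Hx.
      destruct Hx as [i [<- _]]. apply f_nonneg.
    - unfold a, aL. apply sorted_map_seq. intros i _ Hi. apply f_mono; lia. }
  set (Q := qs A a).
  set (b := map (bval a Q) (seq 0 n)).
  assert (Hbnth : forall i, In i Q -> nth i b 0 = nth i a 0).
  { intros i HiQ. unfold b. rewrite nth_map_seq. destruct (Nat.ltb_spec i n) as [Hi|Hi].
    - apply Rle_antisym.
      + unfold bval. apply fold_max_le. apply Hanonneg.
        intros y Hy. apply in_map_iff in Hy. destruct Hy as [q [<- _]].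
        unfold term. destruct (Nat.leb_spec q i). apply Hamono; auto. apply Hanonneg.
      + unfold bval. replace (nth i a 0) with (term a i i).
        apply fold_max_ge. apply in_map_iff. exists i; auto.
        unfold term. rewrite Nat.leb_refl. reflexivity.
    - rewrite Hnth. destruct (Nat.ltb_spec i n); try lia. reflexivity. }
  assert (Hrun : run A b = run A a) by (apply run_agree; auto).
  assert (Hblen : length b = n) by (unfold b; rewrite length_map, length_seq; auto).
  assert (Hvb : valid_input b).
  { split.
    - apply Forall_forall. intros x Hx. unfold b in Hx. apply in_map_iff in Hx.
      destruct Hx as [i [<- _]]. apply fold_max_nonneg.
    - unfold b. apply sorted_map_seq. intros i _ _. unfold bval. apply fold_max_mono.
      intro q. unfold term. destruct (Nat.leb_spec q i); destruct (Nat.leb_spec q (S i)); try lia; try lra.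
      apply Hanonneg. }
  assert (Hbsum : lsum b <= INR (length Q)).
  { unfold b. eapply Rle_trans.
    apply (lsum_le nat (bval a Q) (fun i => lsum (map (fun q => term a q i) Q))).
    { intros i _. unfold bval. apply fold_max_sum. intros y Hy. apply in_map_iff in Hy.
      destruct Hy as [q [<- _]]. unfold term. destruct (q <=? i)%nat; [apply Hanonneg|lra]. }
    rewrite (lsum_swap (term a)). rewrite <- lsum_ones. apply lsum_le.
    intros q _. unfold term. rewrite lsum_const_part. rewrite Hnth.
    destruct (Nat.ltb_spec q n). apply f_mul. lra. }
  pose proof (HA a Hlen Hva) as [Ha1 Ha2].
  pose proof (HA b Hblen Hvb) as [Hb1 Hb2].
  rewrite Hrun in Hb1, Hb2.
  set (s := fst (run A a)) in *.
  assert (Hsa : lsum a <= d * d * lsum b).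
  { assert (lsum a <= d * s).
    { replace (lsum a) with (d * (lsum a / d)) by (field; lra). apply Rmult_le_compat_l; lra. }
    nra. }
  assert (Hk : lsum a <= d * d * INR (snd (run A a))).
  { rewrite qs_len. fold Q. assert (0 < d * d) by nra. nra. }
  assert (Hh : Rmin (ln (INR n)) (ln r) <= lsum a).
  { eapply Rle_trans; [|apply harmonic; lra].
    destruct (Rle_dec (INR n) r).
    - eapply Rle_trans. apply Rmin_l. apply lnle. lra.
      apply Rmin_glb; lra.
    - eapply Rle_trans. apply Rmin_r. rewrite Rmin_right by lra. lra. }
  exists a. split; [auto|split; [auto|split; [|split]]].
  - exists (f r 1). split.
    + unfold a, aL. apply in_map_iff. exists (n - 1)%nat. split.
      f_equal; lia. apply in_seq. lia.
    + unfold f. destruct (Rle_dec (INR 1) r). simpl. lra. simpl in n0. lra.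
  - intros x y Hx Hy Hxpos.
    unfold a, aL in Hx, Hy. apply in_map_iff in Hx, Hy.
    destruct Hx as [i [<- Hi]]. destruct Hy as [j [<- Hj]].
    apply in_seq in Hi, Hj.
    pose proof (f_pos r _ Hxpos). assert (1 <= n - j)%nat by lia. pose proof (f_le1 r (n - j) H0). lra.
  - assert (0 < d * d) by nra.
    apply (Rmult_le_reg_l (d * d)); auto.
    rewrite <- Rmult_assoc, Rinv_r by lra. lra.
Qed.
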